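(* Let $\mathbb{X}$ be a real Banach space and let $f\in \mathbb{X}^{**}$ be weak$^*$ continuous. Let $\mathbb{Y}$ be a linear subspace of $\mathbb{X}^{**}$ such that each member of $\mathbb{Y}$ is weak$^*$ continuous and $f\notin \mathbb{Y}$. Let $g_0\in \mathbb{Y}$. Then $g_0$ is a best approximation to $f$ out of $\mathbb{Y}$ if and only if for every finite-dimensional subspace $\mathbb{Z}$ of $\mathbb{Y}$ containing $g_0$, $$\Big(\bigcap_{g\in \mathbb{Z}}\mathcal{N}(g)\Big)\cap M_{f-g_0} \neq \emptyset.$$
   Context: A functional in $\mathbb{X}^{**}$ is weak$^*$ continuous (as a functional on $\mathbb{X}^*$) iff it equals $\psi(x)$ for some $x\in\mathbb{X}$, $\psi$ the canonical embedding. For $h\in\mathbb{X}^{**}$: $\mathcal{N}(h)=\{x^*\in\mathbb{X}^*:h(x^* )=0\}$ and $M_h=\{x^*\in S_{\mathbb{X}^*}: |h(x^* )|=\|h\|\}$, where $S_{\mathbb{X}^*}$ is the unit sphere of $\mathbb{X}^*$. An element $g_0\in\mathbb{Y}$ is a best approximation to $f$ out of $\mathbb{Y}$ if $\|f-g_0\|=\inf\{\|f-g\|: g\in\mathbb{Y}\}$. *)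

(* Defs.v *)
From HB Require Import structures.
From mathcomp Require Import all_boot all_order all_algebra.
From mathcomp Require Import all_classical all_reals all_analysis.
Set Implicit Arguments. Unset Strict Implicit. Unset Printing Implicit Defensive.
Import Order.TTheory GRing.Theory Num.Theory.
Import numFieldNormedType.Exports.
Local Open Scope classical_set_scope.
Local Open Scope ring_scope.

Section Bidual.
Variables (R : realType) (X : normedModType R).

Definition is_dual (phi : X -> R) : Prop :=
  (forall (a : R) (x y : X), phi (a *: x + y) = a * phi x + phi y) /\ continuous phi.

Definition dual_norm (phi : X -> R) : R :=
  sup [set `|phi x| | x in [set x : X | `|x| <= 1]].

(* Elements of X^** are modelled as functions h : (X -> R) -> R that are
   linear and bounded on X^* and vanish outside X^* (canonical representatives,
   so that equality in X^** is equality of functions). *)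
Definition is_bidual (h : (X -> R) -> R) : Prop :=
  [/\ (forall (a : R) (phi psi : X -> R), is_dual phi -> is_dual psi ->
         h (fun x => a * phi x + psi x) = a * h phi + h psi),
      (exists C : R, forall phi, is_dual phi -> `|h phi| <= C * dual_norm phi) &
      (forall phi, ~ is_dual phi -> h phi = 0)].

Definition bidual_norm (h : (X -> R) -> R) : R :=
  sup [set `|h phi| | phi in [set phi | is_dual phi /\ dual_norm phi <= 1]].

Definition canon (x : X) : (X -> R) -> R :=
  fun phi => if asbool (is_dual phi) then phi x else 0.

(* weak^* continuity of an element of X^** (characterization given in the paper) *)
Definition weakstar_cont (h : (X -> R) -> R) : Prop :=
  exists x : X, h = canon x.

Definition bidual_subspace (Y : set ((X -> R) -> R)) : Prop :=
  [/\ Y `<=` is_bidual, Y (fun _ => 0) &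
      forall (a : R) g1 g2, Y g1 -> Y g2 -> Y (fun phi => a * g1 phi + g2 phi)].

Definition kerb (h : (X -> R) -> R) : set (X -> R) :=
  [set phi | is_dual phi /\ h phi = 0].

Definition Mset (h : (X -> R) -> R) : set (X -> R) :=
  [set phi | [/\ is_dual phi, dual_norm phi = 1 & `|h phi| = bidual_norm h]].

Definition bsub (f g : (X -> R) -> R) : (X -> R) -> R := fun phi => f phi - g phi.

Definition best_approx (f : (X -> R) -> R) (Y : set ((X -> R) -> R))
    (g0 : (X -> R) -> R) : Prop :=
  Y g0 /\ bidual_norm (bsub f g0) = inf [set bidual_norm (bsub f g) | g in Y].

Definition bspan (n : nat) (gs : 'I_n -> (X -> R) -> R) : set ((X -> R) -> R) :=
  [set h | exists c : 'I_n -> R, h = fun phi => \sum_(i < n) c i * gs i phi].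

End Bidual.

(* Main.v *)
Require Import Defs.
From HB Require Import structures.
From mathcomp Require Import all_boot all_order all_algebra.
From mathcomp Require Import all_classical all_reals all_analysis.
From mathcomp Require Import ring lra.
Import Order.TTheory GRing.Theory Num.Theory.
Import numFieldNormedType.Exports.
Local Open Scope classical_set_scope.
Local Open Scope ring_scope.

Set Implicit Arguments. Unset Strict Implicit. Unset Printing Implicit Defensive.

Section S.
Variables (R : realType) (X : normedModType R).
Implicit Types (phi : X -> R).

Definition linf phi := forall (a : R) (x y : X), phi (a *: x + y) = a * phi x + phi y.

Lemma lin0 phi : linf phi -> phi 0 = 0.
Proof. move=> L; have := L 1 0 0; rewrite scaler0 addr0 mul1r; lra. Qed.

Lemma linD phi : linf phi -> forall x y, phi (x + y) = phi x + phi y.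
Proof. by move=> L x y; rewrite -[x in LHS]scale1r L mul1r. Qed.

Lemma linZ phi : linf phi -> forall a x, phi (a *: x) = a * phi x.
Proof. by move=> L a x; rewrite -[_ *: x]addr0 L lin0 // addr0. Qed.

Lemma linB phi : linf phi -> forall x y, phi (x - y) = phi x - phi y.
Proof. by move=> L x y; rewrite linD // -scaleN1r linZ //; lra. Qed.

Lemma bounded_dual phi (k : R) : 0 <= k -> linf phi -> (forall x, `|phi x| <= k * `|x|) -> is_dual phi.
Proof.
move=> k0 L B; split; first exact: L.
move=> x; apply/cvgrPdist_lt => e e0; apply/nbhs_normP.
exists (e / (k + 1)); first by apply: divr_gt0 => //; lra.
move=> y /= Hy; rewrite -linB //; apply: (le_lt_trans (B _)).
have : k * `|x - y| <= k * (e / (k+1)) by rewrite ler_wpM2l // ltW.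
have : k * (e / (k + 1)) < e.
  rewrite mulrA ltr_pdivrMr; last lra.
  rewrite [e * _]mulrC ltr_pM2r //; lra.
lra.
Qed.


Lemma dual_bound phi : is_dual phi -> exists k, 0 <= k /\ forall x, `|phi x| <= k * `|x|.
Proof.
move=> [L C]; have := C 0; move/cvgrPdist_lt/(_ 1 ltr01).
move=> /nbhs_norm0P [d /= d0 Hd].
exists (2 / d); split; first by apply: divr_ge0 => //; apply: ltW.
move=> x; have [->|x0] := eqVneq x 0; first by rewrite lin0 // !normr0 mulr0.
have nx : 0 < `|x| by rewrite normr_gt0.
pose t := d / (2 * `|x|).
have t0 : 0 < t by rewrite /t divr_gt0 // mulr_gt0.
have : `|phi 0 - phi (t *: x)| < 1.
  apply: Hd; rewrite /= normrZ gtr0_norm // /t.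
  have -> : d / (2 * `|x|) * `|x| = d / 2 by field; rewrite gt_eqF.
  lra.
rewrite lin0 // sub0r normrN linZ // normrM gtr0_norm // => H.
have -> : 2 / d * `|x| = t^-1 by rewrite /t invf_div; field; rewrite gt_eqF.
by apply: ltW; rewrite -(ltr_pM2l t0) divff // gt_eqF.
Qed.

Definition dset phi := [set `|phi x| | x in [set x : X | `|x| <= 1]].

Lemma dset_sup phi : is_dual phi -> has_sup (dset phi).
Proof.
move=> D; have [k [k0 Hk]] := dual_bound D; split.
  by exists `|phi 0|; exists 0 => //=; rewrite normr0 ler01.
exists k => _ [x /= x1 <-]; apply: (le_trans (Hk x)).
by rewrite -[leRHS]mulr1 ler_wpM2l.
Qed.

Lemma dual_norm_ge0 phi : is_dual phi -> 0 <= dual_norm phi.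
Proof.
move=> D; have [_ ub] := dset_sup D; apply: (le_trans (normr_ge0 (phi 0))).
apply: ub_le_sup ub _ _.
by exists 0 => //=; rewrite normr0 ler01.
Qed.

Lemma dual_normP phi : is_dual phi -> forall x, `|phi x| <= dual_norm phi * `|x|.
Proof.
move=> D x; have [_ ub] := dset_sup D.
have [->|x0] := eqVneq x 0; first by rewrite lin0 ?normr0 ?mulr0 //; case: D.
have nx : 0 < `|x| by rewrite normr_gt0.
have H : `|phi (`|x|^-1 *: x)| <= dual_norm phi.
  apply: ub_le_sup ub _ _; exists (`|x|^-1 *: x) => //=.
  by rewrite normrZ normrV ?unitfE ?gt_eqF // normr_id mulVf // gt_eqF.
move: H; rewrite linZ; last by case: D.
by rewrite normrM normrV ?unitfE ?gt_eqF // normr_id mulrC -ler_pdivlMr ?invr_gt0 // invrK.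
Qed.

Lemma dual_norm_le1 phi : is_dual phi -> (forall x, `|phi x| <= `|x|) -> dual_norm phi <= 1.
Proof.
move=> D H; apply: ge_sup; first by exists `|phi 0|; exists 0 => //=; rewrite normr0 ler01.
move=> _ [x /= x1 <-]; have := H x; lra.
Qed.

Lemma sup_ge0' (S : set R) : S !=set0 -> (forall x, S x -> 0 <= x) -> 0 <= sup S.
Proof.
move=> [s Ss] ge0; case: (pselect (has_ubound S)) => [ub|nub].
  apply: (le_trans (ge0 s Ss)); exact: ub_le_sup ub _ Ss.
by rewrite sup_out // => -[].
Qed.

Lemma zero_dual : is_dual (fun _ : X => 0 : R).
Proof.
apply: (@bounded_dual _ 0) => //; first by move=> *; rewrite mulr0 addr0.
by move=> x; rewrite normr0 mul0r.
Qed.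

Definition bset (h : (X -> R) -> R) :=
  [set `|h phi| | phi in [set phi | is_dual phi /\ dual_norm phi <= 1]].

Lemma bset_n0 h : bset h !=set0.
Proof.
exists `|h (fun _ => 0)|; exists (fun _ => 0) => //; split; first exact: zero_dual.
by apply: dual_norm_le1; [exact: zero_dual|move=> x; rewrite normr0].
Qed.

Lemma bidual_norm_ge0 h : 0 <= @bidual_norm R X h.
Proof. by apply: sup_ge0' (bset_n0 h) _ => _ [phi _ <-]. Qed.

Lemma bidual_normP h (B : R) :
  (forall phi, is_dual phi -> dual_norm phi <= 1 -> `|h phi| <= B) ->
  forall phi, is_dual phi -> dual_norm phi <= 1 -> `|h phi| <= @bidual_norm R X h.
Proof.
move=> HB phi D N; apply: ub_le_sup; last by exists phi.
by exists B => _ [psi [D' N'] <-]; apply: HB.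
Qed.

Lemma bidual_norm_le h (B : R) :
  (forall phi, is_dual phi -> dual_norm phi <= 1 -> `|h phi| <= B) ->
  @bidual_norm R X h <= B.
Proof. by move=> HB; apply: ge_sup (bset_n0 h) _ => _ [psi [D' N'] <-]; apply: HB. Qed.

Lemma canonE x phi : is_dual phi -> Defs.canon x phi = phi x.
Proof. by move=> D; rewrite /Defs.canon asboolT. Qed.

Lemma canonN x phi : ~ is_dual phi -> Defs.canon x phi = 0.
Proof. by move=> D; rewrite /Defs.canon asboolF. Qed.

Lemma canon_bound a b phi : is_dual phi -> dual_norm phi <= 1 ->
  `|bsub (Defs.canon a) (Defs.canon b) phi| <= `|a - b|.
Proof.
move=> D N; rewrite /bsub !canonE // -linB; last by case: D.
apply: le_trans (dual_normP D _) _; rewrite -[leRHS]mul1r ler_wpM2r //.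
Qed.


Definition goodG (G : set (X * R)) :=
  (forall s p q, G p -> G q -> G (s *: p.1 + q.1, s * p.2 + q.2)) /\
  (forall p, G p -> `|p.2| <= `|p.1|).

Lemma goodG_fun G x a b : goodG G -> G (x, a) -> G (x, b) -> a = b.
Proof.
move=> [C B] Ha Hb; have := B _ (C (-1) _ _ Ha Hb) => /=.
rewrite scaleN1r addNr normr0 normr_le0 mulN1r addrC subr_eq0 => /eqP ->//.
Qed.

Lemma goodG_scale G p t : goodG G -> G (0, 0) -> G p -> G (t *: p.1, t * p.2).
Proof. by move=> [C B] G0 Gp; have := C t _ _ Gp G0; rewrite /= !addr0. Qed.

Lemma goodG_extend G z : goodG G -> G (0, 0) -> ~ (exists a, G (z, a)) ->
  exists c, goodG [set p | exists q t, G q /\ p = (q.1 + t *: z, q.2 + t * c)].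
Proof.
move=> [C B] G00 nz.
have key q r : G q -> G r -> - `|q.1 + z| - q.2 <= `|r.1 + z| - r.2.
  move=> Gq Gr; have := B _ (C (-1) _ _ Gq Gr) => /=.
  have -> : -1 *: q.1 + r.1 = (r.1 + z) - (q.1 + z).
    by rewrite scaleN1r opprD addrACA subrr addr0 addrC.
  move=> H; have := le_trans H (ler_normB _ _).
  rewrite mulN1r => /ler_normlP [H1 H2]; lra.
pose Sc := [set - `|q.1 + z| - q.2 | q in G].
pose c := sup Sc.
have Sn : Sc !=set0 by exists (- `|(0 : X) + z| - 0); exists (0, 0).
have ubS : has_ubound Sc.
  by exists (`|(0:X) + z| - 0) => _ [q Gq <-]; apply: (key q (0,0)).
have Hc q : G q -> `|q.2 + c| <= `|q.1 + z|.
  move=> Gq; have h1 : - `|q.1 + z| - q.2 <= c by apply: ub_le_sup ubS _ _; exists q.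
  have h2 : c <= `|q.1 + z| - q.2.
    by apply: ge_sup Sn _ => _ [r Gr <-]; apply: key.
  apply/ler_normlP; split; lra.
exists c; split.
  move=> s _ _ [q [t [Gq ->]]] [q' [t' [Gq' ->]]] /=.
  exists (s *: q.1 + q'.1, s * q.2 + q'.2), (s * t + t'); split; first exact: C.
  congr (_, _) => /=; last by ring.
  by rewrite scalerDr scalerA scalerDl addrACA.
move=> _ [q [t [Gq ->]]] /=.
have [->|t0] := eqVneq t 0; first by rewrite scale0r mul0r !addr0; apply: B.
have := Hc _ (goodG_scale t^-1 (conj C B) G00 Gq) => /= H.
have -> : q.2 + t * c = t * (t^-1 * q.2 + c) by field.
have -> : q.1 + t *: z = t *: (t^-1 *: q.1 + z).
  by rewrite scalerDr scalerA divff // scale1r.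
by rewrite normrM normrZ ler_wpM2l.
Qed.

Lemma hahn_banach (G0 : set (X * R)) : goodG G0 -> G0 (0, 0) ->
  exists F : X -> R, [/\ is_dual F, (forall x, `|F x| <= `|x|) &
    (forall p, G0 p -> F p.1 = p.2)].
Proof.
move=> gG0 G00.
pose P := fun G : set (X * R) => G = set0 \/ (G0 `<=` G /\ goodG G).
have [|A [PA maxA]] := @Zorn_bigcup (X * R) P.
  move=> Fam FP tot.
  case: (pselect (\bigcup_(A in Fam) A = set0)) => [->|ne]; [by left|right].
  have gA : forall A, Fam A -> forall p, A p -> G0 `<=` A /\ goodG A.
    by move=> A FA p Ap; case: (FP A FA) => // A0; move: Ap; rewrite A0.
  have /set0P [p0 [A0 FA0 A0p]] : \bigcup_(A in Fam) A != set0 by apply/eqP.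
  split.
    by move=> p G0p; exists A0 => //; apply: (gA A0 FA0 p0 A0p).1.
  split.
    move=> s p q [A1 FA1 A1p] [A2 FA2 A2q].
    case: (tot A1 A2 FA1 FA2) => [s12|s21].
      exists A2 => //; apply: (gA A2 FA2 q A2q).2.1 => //; exact: s12.
    exists A1 => //; apply: (gA A1 FA1 p A1p).2.1 => //; exact: s21.
  by move=> p [A1 FA1 A1p]; apply: (gA A1 FA1 p A1p).2.2.
have [sub gA] : G0 `<=` A /\ goodG A.
  case: PA => // A0; exfalso; apply: (maxA G0); last by rewrite /P; right; split.
  by rewrite A0; split => // /(_ _ G00).
have tot z : exists a, A (z, a).
  apply: contrapT => nz; have [c gB] := goodG_extend gA (sub _ G00) nz.
  pose B := [set p | exists q t, A q /\ p = (q.1 + t *: z, q.2 + t * c)].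
  have AB : A `<=` B.
    by move=> [x a] Ap; exists (x, a), 0; rewrite scale0r mul0r !addr0.
  apply: (maxA B); last by rewrite /P; right; split => //; apply: subset_trans AB.
  split => // /(_ (z, c)) BA; apply: nz; exists c; apply: BA.
  by exists (0, 0), 1; split; [apply: sub|rewrite scale1r mul1r !add0r].
have [F HF] := choice tot.
have lin : linf F.
  move=> a x y; apply: (goodG_fun gA (HF _)).
  by have := gA.1 a _ _ (HF x) (HF y).
have bnd x : `|F x| <= `|x| by apply: (gA.2 (x, F x)).
exists F; split => //.
  by apply: (@bounded_dual F 1) => // x; rewrite mul1r.
by move=> [x a] /sub Ap /=; apply: (goodG_fun gA (HF x) Ap).
Qed.

End S.

Section T.
Variables (R : realType) (X : normedModType R).

Lemma Ysum (Y : set ((X -> R) -> R)) n (gs : 'I_n -> (X -> R) -> R) (e : 'I_n -> R) :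
  bidual_subspace Y -> (forall i, Y (gs i)) ->
  Y (fun phi => \sum_(i < n) e i * gs i phi).
Proof.
move=> [_ Y0 Ycl] Ygs.
suff H : forall s, Y (fun phi => \sum_(i <- s) e i * gs i phi) by exact: H.
elim => [|a s IH].
  by under eq_fun do rewrite big_nil.
by under eq_fun do rewrite big_cons; apply: Ycl.
Qed.

Lemma canon_sum n (y : 'I_n -> X) (e : 'I_n -> R) :
  (fun phi => \sum_(i < n) e i * Defs.canon (y i) phi) = Defs.canon (\sum_(i < n) e i *: y i).
Proof.
apply: funext => phi; case: (pselect (is_dual phi)) => D; last first.
  by rewrite canonN // big1 // => i _; rewrite canonN // mulr0.
rewrite canonE //; under eq_bigr do rewrite canonE //.
have L : linf phi by case: D.
apply: (big_rec2 (fun a b => a = phi b)); first by rewrite lin0.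
by move=> i a b _ ->; rewrite L.
Qed.


Lemma norming v : exists psi : X -> R,
  [/\ is_dual psi, (forall z, `|psi z| <= `|z|) & psi v = `|v|].
Proof.
pose G1 := [set p | exists t, p = (t *: v, t * `|v|)].
have [||psi [Dpsi bpsi epsi]] := @hahn_banach R X G1.
+ split.
    move=> s _ _ [t ->] [t' ->] /=; exists (s * t + t').
    by congr (_, _); [rewrite scalerA scalerDl | ring].
  move=> _ [t ->] /=; change (`|t * `|v| | <= `|t *: v|).
  by rewrite !normrZ normr_id.
+ by exists 0; rewrite scale0r mul0r.
exists psi; split => //.
by apply: (epsi (v, `|v|)); exists 1; rewrite scale1r mul1r.
Qed.

Lemma annihilator (W : set X) x d :
  (forall s w1 w2, W w1 -> W w2 -> W (s *: w1 + w2)) -> W 0 -> 0 <= d ->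
  (forall w, W w -> d <= `|x - w|) ->
  exists F : X -> R, [/\ is_dual F, (forall z, `|F z| <= `|z|), F x = d &
     forall w, W w -> F w = 0].
Proof.
move=> Wcl W0 d0 dist.
pose G := [set p | exists w t, W w /\ p = (w + t *: x, t * d)].
have [||F [DF bF eF]] := @hahn_banach R X G.
+ split.
    move=> s _ _ [w1 [t1 [W1 ->]]] [w2 [t2 [W2 ->]]] /=.
    exists (s *: w1 + w2), (s * t1 + t2); split; first exact: Wcl.
    by congr (_, _); [rewrite scalerDr scalerA scalerDl addrACA | ring].
  move=> _ [w [t [Ww ->]]] /=.
  have [->|t0] := eqVneq t 0; first by rewrite mul0r normr0.
  have -> : w + t *: x = t *: (x - (- (t^-1 *: w))).
    by rewrite opprK scalerDr scalerA divff // scale1r addrC.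
  rewrite normrM normrZ (ger0_norm d0) ler_wpM2l //; apply: dist.
  have := Wcl (- t^-1) _ _ Ww W0; rewrite addr0 scaleNr //.
+ by exists 0, 0; rewrite scale0r mul0r addr0.
exists F; split => //.
  by apply: (eF (x, d)); exists 0, 1; rewrite add0r scale1r mul1r.
move=> w Ww.
by apply: (eF (w, 0)); exists w, 0; rewrite scale0r addr0 mul0r.
Qed.

End T.

Unset Implicit Arguments. Set Strict Implicit.

Theorem theorem4p1 (R : realType) (X : completeNormedModType R)
  (f : (X -> R) -> R) (Y : set ((X -> R) -> R)) (g0 : (X -> R) -> R) :
  weakstar_cont f ->
  bidual_subspace Y ->
  (forall g, Y g -> weakstar_cont g) ->
  ~ Y f ->
  Y g0 ->
  (best_approx f Y g0 <->
   (forall (n : nat) (gs : 'I_n -> (X -> R) -> R),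
      (forall i, Y (gs i)) -> bspan gs g0 ->
      (\bigcap_(g in bspan gs) kerb g) `&` Mset (bsub f g0) !=set0)).
Proof.
move=> [x fx] YS Ywc nYf Yg0; have [Ysub Y0 Ycl] := YS; split.
- move=> [_ BA] n gs Ygs [c g0E].
  have [y Hy] := choice (fun i => Ywc _ (Ygs i)).
  have gsE : gs = fun i => Defs.canon (y i) by apply: funext.
  subst gs.
  pose W := fun w => exists e : 'I_n -> R, w = \sum_(i < n) e i *: y i.
  pose x0 := \sum_(i < n) c i *: y i.
  have g0E' : g0 = Defs.canon x0 by rewrite g0E canon_sum.
  have canonW w : W w -> Y (Defs.canon w).
    by move=> [e ->]; rewrite -canon_sum; apply: Ysum.
  pose d := bidual_norm (bsub f g0).
  have dist w : W w -> d <= `|x - w|.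
    move=> Ww; rewrite /d BA.
    apply: (@le_trans _ _ (bidual_norm (bsub f (Defs.canon w)))).
      apply: ge_inf; last by exists (Defs.canon w) => //; apply: canonW.
      by exists 0 => _ [g _ <-]; apply: bidual_norm_ge0.
    by apply: bidual_norm_le => phi D N; rewrite fx; apply: canon_bound.
  have xx0 : x - x0 != 0.
    apply/negP; rewrite subr_eq0 => /eqP xx0; apply: nYf.
    by rewrite fx xx0 -g0E'.
  have dbound phi : is_dual phi -> dual_norm phi <= 1 -> `|phi x - phi x0| <= d.
    move=> D N.
    have HB : forall psi, is_dual psi -> dual_norm psi <= 1 -> `|bsub f g0 psi| <= `|x - x0|.
      by move=> psi D' N'; rewrite fx g0E'; apply: canon_bound.
    have := bidual_normP HB D N.
    by rewrite -/d /bsub fx g0E' !canonE.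
  have dpos : 0 < d.
    have [psi [Dpsi bpsi epsi]] := norming (x - x0).
    have := dbound psi Dpsi (dual_norm_le1 Dpsi bpsi).
    rewrite -linB; last by case: Dpsi.
    by rewrite epsi normr_id; apply: lt_le_trans; rewrite normr_gt0.
  have [||||F [DF bF Fx FW]] := @annihilator R X W x d.
  + move=> s _ _ [e1 ->] [e2 ->]; exists (fun i => s * e1 i + e2 i).
    rewrite scaler_sumr -big_split; apply: eq_bigr => i _.
    by rewrite scalerDl scalerA.
  + by exists (fun _ => 0); rewrite big1 // => i _; rewrite scale0r.
  + exact: ltW.
  + exact: dist.
  have Fx0 : F x0 = 0 by apply: FW; exists c.
  have N1 : dual_norm F = 1.
    apply/eqP; rewrite eq_le dual_norm_le1 //=.
    have N0 := dual_norm_ge0 DF.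
    rewrite leNgt; apply/negP => N1.
    have [N00|Npos] := eqVneq (dual_norm F) 0.
      have := dual_normP DF (x - x0); rewrite N00 mul0r linB; last by case: DF.
      rewrite Fx Fx0 subr0 normr_le0 => /eqP d0; move: dpos; rewrite d0 ltxx.
      done.
    have Np : 0 < dual_norm F by rewrite lt_neqAle eq_sym Npos.
    pose psi := fun z => F z / dual_norm F.
    have Lpsi : linf psi.
      by move=> a u v; rewrite /psi (proj1 DF); field; rewrite gt_eqF.
    have bpsi z : `|psi z| <= `|z|.
      rewrite /psi normrM normfV (gtr0_norm Np) ler_pdivrMr // mulrC.
      exact: dual_normP.
    have Dpsi : is_dual psi by apply: (@bounded_dual R X psi 1) => // z; rewrite mul1r.
    have := dbound psi Dpsi (dual_norm_le1 Dpsi bpsi).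
    rewrite /psi Fx Fx0 mul0r subr0 normrM normfV (gtr0_norm Np) (gtr0_norm dpos).
    rewrite ler_pdivrMr // => H.
    have : d * dual_norm F < d by rewrite -[ltRHS]mulr1 ltr_pM2l.
    lra.
  exists F; split.
    move=> g [e ->]; split => //.
    have E := congr1 (fun h => h F) (canon_sum y e); rewrite /= in E.
    rewrite E canonE //.
    by apply: FW; exists e.
  rewrite /Mset /=; split => //; rewrite -/d /bsub fx g0E' !canonE // Fx Fx0 subr0.
  by rewrite gtr0_norm.
- move=> H.
  pose B g := bidual_norm (bsub f g).
  have key g : Y g -> B g0 <= B g.
    move=> Yg; have [y gy] := Ywc g Yg.
    pose gs := fun i : 'I_2 => if val i == 0%N then g0 else g.
    have Ygs i : Y (gs i) by rewrite /gs; case: ifP.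
    have sp (a b : R) h : h = (fun phi => a * g0 phi + b * g phi) -> bspan gs h.
      move=> ->; exists (fun i : 'I_2 => if val i == 0%N then a else b).
      by apply: funext => phi; rewrite !big_ord_recl big_ord0 /= addr0.
    have sp0 : bspan gs g0.
      by apply: (sp 1 0); apply: funext => phi; rewrite mul1r mul0r addr0.
    have [F [capF MF]] := H 2 gs Ygs sp0.
    move: MF; rewrite /Mset /= => -[DF NF MF].
    have gF : g F = 0.
      have : bspan gs g by apply: (sp 0 1); apply: funext => phi; rewrite mul1r mul0r add0r.
      by move=> /capF [].
    have g0F : g0 F = 0 by have := capF g0 sp0 => -[].
    have HB : forall psi, is_dual psi -> dual_norm psi <= 1 -> `|bsub f g psi| <= `|x - y|.
      by move=> psi D' N'; rewrite fx gy; apply: canon_bound.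
    rewrite /B -MF /bsub g0F subr0.
    have -> : f F = f F - g F by rewrite gF subr0.
    by apply: (bidual_normP HB DF); rewrite NF.
  rewrite /best_approx; split => //; apply/eqP; rewrite eq_le; apply/andP; split.
    apply: lb_le_inf; first by exists (B g0); exists g0.
    by move=> _ [g Yg <-]; apply: key.
  apply: ge_inf; last by exists g0.
  by exists (B g0) => _ [g Yg <-]; apply: key.
Qed.
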